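(* Let $\mathcal{X},\mathcal{Y}$ be finite alphabets, $P_X$ a fully supported PMF on $\mathcal{X}$ and $P_{Y|X}$ a transition kernel from $\mathcal{X}$ to $\mathcal{Y}$; write $P_{XY}=P_X\otimes P_{Y|X}$. Let $K\geq 2$, let $X_1,\ldots,X_K$ be IID with law $P_X$, let $\pi\in S_K$ be a cycle of length $K$, and set $\tilde X_j=X_{\pi(j)}$ for $j\in[K]$. Then $$\mathbb{E}\Big[\exp\Big(-\sum_{j=1}^K d_{P_{Y|X}}(X_j,\tilde X_j)\Big)\Big]\leq e^{-K\psi_2(P_{XY})},$$ where $\psi_2(P_{XY})=\min_{Q_{X_1X_2}\in\mathcal{P}(\mathcal{X}^2)}\big\{\tfrac12 D_{\mathrm{KL}}(Q_{X_1X_2}\|P_X^{\otimes2})+d_{P_{Y|X}}(Q_{X_1X_2})\big\}$.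
   Context: For $x_1,x_2\in\mathcal{X}$, $d_{P_{Y|X}}(x_1,x_2)=-\log\sum_{y\in\mathcal{Y}}\sqrt{P_{Y|X}(y|x_1)P_{Y|X}(y|x_2)}$ (Bhattacharyya distance), and for a joint PMF $Q_{X_1X_2}$ on $\mathcal{X}^2$, $d_{P_{Y|X}}(Q_{X_1X_2})=\sum_{x_1,x_2}Q_{X_1X_2}(x_1,x_2)d_{P_{Y|X}}(x_1,x_2)$. $\mathcal{P}(\mathcal{X}^2)$ denotes the probability simplex on $\mathcal{X}^2$. *)

(* Defs.v *)
From HB Require Import structures.
From mathcomp Require Import all_boot all_order all_algebra all_fingroup.
From mathcomp Require Import all_classical all_reals all_analysis.
Set Implicit Arguments. Unset Strict Implicit. Unset Printing Implicit Defensive.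
Import Order.TTheory GRing.Theory Num.Theory.
Local Open Scope classical_set_scope.
Local Open Scope ring_scope.

Section Defs.
Variables (R : realType) (X Y : finType).

Definition full_pmf (P : X -> R) : Prop :=
  (forall x, 0 < P x) /\ \sum_(x : X) P x = 1.

Definition trans_kernel (W : X -> Y -> R) : Prop :=
  forall x, (forall y, 0 <= W x y) /\ \sum_(y : Y) W x y = 1.

Definition pmf2 (Q : X * X -> R) : Prop :=
  (forall p, 0 <= Q p) /\ \sum_(p : X * X) Q p = 1.

Definition bhat_coef (W : X -> Y -> R) (x1 x2 : X) : R :=
  \sum_(y : Y) Num.sqrt (W x1 y * W x2 y).

Definition bhat_dist (W : X -> Y -> R) (x1 x2 : X) : \bar R :=
  if bhat_coef W x1 x2 == 0 then +oo%E else (- ln (bhat_coef W x1 x2))%:E.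

Definition bhat_dist2 (W : X -> Y -> R) (Q : X * X -> R) : \bar R :=
  (\sum_(p : X * X) (Q p)%:E * bhat_dist W p.1 p.2)%E.

(* D_KL(Q || P_X^{(x)2}), convention 0 ln 0 = 0 (mathcomp: ln 0 = 0) *)
Definition KL2 (P : X -> R) (Q : X * X -> R) : R :=
  \sum_(p : X * X) Q p * ln (Q p / (P p.1 * P p.2)).

(* psi_2(P_XY) as the min (taken as infimum) over the simplex P(X^2) *)
Definition psi2 (P : X -> R) (W : X -> Y -> R) : \bar R :=
  ereal_inf [set ((KL2 P Q / 2)%:E + bhat_dist2 W Q)%E | Q in pmf2].

Definition full_cycle (K : nat) (pi : {perm 'I_K}) : Prop :=
  forall i : 'I_K, #|porbit pi i| = K.

(* E[exp(-sum_j d(X_j, X_{pi j}))] for X_1..X_K iid ~ P *)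
Definition cyc_expect (P : X -> R) (W : X -> Y -> R) (K : nat)
    (pi : {perm 'I_K}) : \bar R :=
  (\sum_(x : {ffun 'I_K -> X})
     (\prod_(i < K) P (x i))%:E *
     expeR (- \sum_(j < K) bhat_dist W (x j) (x (pi j))))%E.

End Defs.

(* Main.v *)
Require Import Defs.
From HB Require Import structures.
From mathcomp Require Import all_boot all_order all_algebra all_fingroup.
From mathcomp Require Import all_classical all_reals all_analysis.
From mathcomp Require Import ring lra.
Set Implicit Arguments. Unset Strict Implicit. Unset Printing Implicit Defensive.
Import Order.TTheory GRing.Theory Num.Theory.
Local Open Scope ring_scope.

Section CS.
Variables (R : realType) (I : finType).
Lemma cs_sum (u v : I -> R) :
  (\sum_i u i * v i) ^+ 2 <= (\sum_i u i ^+ 2) * (\sum_i v i ^+ 2).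
Proof.
have H : 0 <= \sum_i \sum_j (u i * v j - u j * v i) ^+ 2.
  by apply: sumr_ge0 => i _; apply: sumr_ge0 => j _; exact: sqr_ge0.
have E : \sum_i \sum_j (u i * v j - u j * v i) ^+ 2 =
   2 * ((\sum_i u i ^+ 2) * (\sum_i v i ^+ 2) - (\sum_i u i * v i) ^+ 2).
  have -> : \sum_i \sum_j (u i * v j - u j * v i) ^+ 2 =
     \sum_i \sum_j (u i ^+ 2 * v j ^+ 2) + \sum_i \sum_j (u j ^+ 2 * v i ^+ 2)
     - 2 * \sum_i \sum_j (u i * v i) * (u j * v j).
    rewrite mulr_sumr -big_split -sumrB /=; apply: eq_bigr => i _.
    rewrite mulr_sumr -big_split -sumrB /=; apply: eq_bigr => j _; ring.
  have E1 : \sum_i \sum_j (u i ^+ 2 * v j ^+ 2) = (\sum_i u i ^+ 2) * (\sum_i v i ^+ 2).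
    by rewrite mulr_suml; apply: eq_bigr => i _; rewrite mulr_sumr.
  have E2 : \sum_i \sum_j (u j ^+ 2 * v i ^+ 2) = (\sum_i u i ^+ 2) * (\sum_i v i ^+ 2).
    by rewrite exchange_big /= E1.
  have E3 : \sum_i \sum_j (u i * v i) * (u j * v j) = (\sum_i u i * v i) ^+ 2.
    by rewrite expr2 mulr_suml; apply: eq_bigr => i _; rewrite mulr_sumr.
  rewrite E1 E2 E3; ring.
rewrite E in H; rewrite -subr_ge0; lra.
Qed.
End CS.

Section Path.
Variables (R : realType) (X : finType) (G : X -> X -> R).

Fixpoint Wk (n : nat) (a b : X) : R :=
  match n with 0 => (a == b)%:R | n'.+1 => \sum_c G a c * Wk n' c b end.

Definition cons_ff n (c : X) (f : {ffun 'I_n -> X}) : {ffun 'I_n.+1 -> X} :=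
  [ffun i => if unlift ord0 i is Some j then f j else c].

Lemma cons_ff0 n c (f : {ffun 'I_n -> X}) : cons_ff c f ord0 = c.
Proof. by rewrite ffunE unlift_none. Qed.

Lemma cons_ffS n c (f : {ffun 'I_n -> X}) j : cons_ff c f (lift ord0 j) = f j.
Proof. by rewrite ffunE liftK. Qed.

Lemma sum_ffunS n (H : {ffun 'I_n.+1 -> X} -> R) :
  \sum_g H g = \sum_c \sum_(f : {ffun 'I_n -> X}) H (cons_ff c f).
Proof.
rewrite pair_big /=.
rewrite (reindex (fun p : X * {ffun 'I_n -> X} => cons_ff p.1 p.2)) //=.
exists (fun g : {ffun 'I_n.+1 -> X} => (g ord0, [ffun j => g (lift ord0 j)])).
  move=> [c f] _ /=; rewrite cons_ff0; congr (_, _).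
  by apply/ffunP => j; rewrite ffunE cons_ffS.
move=> g _ /=; apply/ffunP => i; rewrite ffunE.
by case: unliftP => [j ->|->]; rewrite ?ffunE.
Qed.

Lemma path_sum n (h : X -> X -> R) :
  \sum_(y : {ffun 'I_n.+1 -> X})
    (\prod_(k < n) G (y (inord k)) (y (inord k.+1))) * h (y (inord 0)) (y (inord n))
  = \sum_a \sum_b Wk n a b * h a b.
Proof.
elim: n h => [|n IH] h.
  rewrite sum_ffunS; apply: eq_bigr => c _.
  have -> : (inord 0 : 'I_1) = ord0 by apply: val_inj; rewrite /= inordK.
  under eq_bigr => f _ do rewrite big_ord0 mul1r cons_ff0.
  rewrite sumr_const card_ffun card_ord expn0 mulr1n /=.
  rewrite (bigD1 c) //= eqxx mul1r big1 ?addr0 // => b /negbTE.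
  by rewrite eq_sym => ->; rewrite mul0r.
rewrite sum_ffunS.
have E0 : (inord 0 : 'I_n.+2) = ord0 by apply: val_inj; rewrite /= inordK.
have ES : forall k, (k <= n)%N -> (inord k.+1 : 'I_n.+2) = lift ord0 (inord k : 'I_n.+1).
  by move=> k hk; apply: val_inj; rewrite /= !inordK.
transitivity (\sum_c \sum_(f : {ffun 'I_n.+1 -> X})
   (\prod_(k < n) G (f (inord k)) (f (inord k.+1))) * (G c (f (inord 0)) * h c (f (inord n)))).
  apply: eq_bigr => c _; apply: eq_bigr => f _.
  rewrite big_ord_recl E0 cons_ff0 (ES 0%N) // cons_ffS (ES n) // cons_ffS.
  have -> : \prod_(i < n) G (cons_ff c f (inord (lift ord0 i)))
      (cons_ff c f (inord (lift ord0 i).+1)) = \prod_(k < n) G (f (inord k)) (f (inord k.+1)).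
    apply: eq_bigr => k _; rewrite lift0 (ES k) ?(ES k.+1) ?cons_ffS //.
    exact: ltnW.
  ring.
under eq_bigr => c _ do rewrite (IH (fun a b => G c a * h c b)).
apply: eq_bigr => c _; rewrite exchange_big /=; apply: eq_bigr => b _.
by rewrite mulr_suml; apply: eq_bigr => a _; ring.
Qed.

Definition FF := \sum_a \sum_b G a b ^+ 2.

Lemma FF_ge0 : 0 <= FF.
Proof. by apply: sumr_ge0 => a _; apply: sumr_ge0 => b _; exact: sqr_ge0. Qed.

Lemma Wk1 a b : Wk 1 a b = G a b.
Proof.
rewrite /= (bigD1 b) //= eqxx mulr1 big1 ?addr0 // => c /negbTE ->.
by rewrite mulr0.
Qed.

Lemma Wk_norm n : \sum_a \sum_b Wk n.+1 a b ^+ 2 <= FF ^+ n.+1.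
Proof.
elim: n => [|n IH].
  by rewrite expr1 /FF le_eqVlt; apply/orP; left; apply/eqP; apply: eq_bigr => a _; apply: eq_bigr => b _; rewrite Wk1.
apply: (@le_trans _ _ (\sum_a \sum_b (\sum_c G a c ^+ 2) * (\sum_c Wk n.+1 c b ^+ 2))).
  apply: ler_sum => a _; apply: ler_sum => b _; exact: cs_sum.
have -> : \sum_a \sum_b (\sum_c G a c ^+ 2) * (\sum_c Wk n.+1 c b ^+ 2)
   = FF * \sum_c \sum_b Wk n.+1 c b ^+ 2.
  rewrite /FF mulr_suml; apply: eq_bigr => a _; rewrite -mulr_sumr.
  by rewrite [X in _ * X]exchange_big.
by rewrite exprS; apply: ler_wpM2l; [exact: FF_ge0|exact: IH].
Qed.

Lemma cycle_bound n :
  (\sum_(y : {ffun 'I_n.+2 -> X}) \prod_(k < n.+2) G (y k) (y (ordS k))) ^+ 2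
  <= FF ^+ n.+2.
Proof.
have E : forall y : {ffun 'I_n.+2 -> X}, \prod_(k < n.+2) G (y k) (y (ordS k)) =
   (\prod_(k < n.+1) G (y (inord k)) (y (inord k.+1))) * G (y (inord n.+1)) (y (inord 0)).
  move=> y; rewrite big_ord_recr /=; congr (_ * _).
    apply: eq_bigr => k _.
    have h1 : widen_ord (leqnSn n.+1) k = inord k.
      by apply: val_inj; rewrite /= inordK // ltnW // ltnS.
    have h2 : ordS (widen_ord (leqnSn n.+1) k) = inord k.+1.
      apply: val_inj => /=; rewrite inordK ?modn_small // ltnS // ltnW // ltnS ?ltnW // ltnW.
    by rewrite h2 h1.
  have h1 : (ord_max : 'I_n.+2) = inord n.+1 by apply: val_inj; rewrite /= inordK.
  have h2 : ordS (ord_max : 'I_n.+2) = inord 0 by apply: val_inj; rewrite /= inordK // modnn.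
  by rewrite h2 h1.
under eq_bigr => y _ do rewrite E.
rewrite (path_sum n.+1 (fun a b => G b a)).
rewrite pair_big.
apply: le_trans (cs_sum _ _) _.
rewrite -(pair_big predT predT (fun a b => Wk n.+1 a b ^+ 2)).
rewrite -(pair_big predT predT (fun a b => G b a ^+ 2)).
have -> : \sum_a \sum_b G b a ^+ 2 = FF by rewrite /FF exchange_big.
rewrite exprS mulrC.
by apply: ler_wpM2l; [exact: FF_ge0|exact: Wk_norm].
Qed.
End Path.

Section Main.
Variables (R : realType).

Lemma expe_cost (I : Type) (r : seq I) (c : I -> R) : (forall i, 0 <= c i) ->
  expeR (- \sum_(i <- r) (if c i == 0%R then +oo else (- ln (c i))%:E))%E
  = (\prod_(i <- r) c i)%:E.
Proof.
move=> c0.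
pose Q (e : \bar R) (v : R) :=
  (e = +oo%E /\ v = 0) \/ (exists s, e = s%:E /\ v = expR (- s)).
suff : Q (\sum_(i <- r) (if c i == 0%R then +oo else (- ln (c i))%:E))%E
         (\prod_(i <- r) c i).
  by case=> [[-> ->]|[s [-> ->]]].
apply: (big_ind2 Q).
- by right; exists 0; split => //; rewrite oppr0 expR0.
- move=> e1 v1 e2 v2 [[-> ->]|[s1 [-> ->]]] [[-> ->]|[s2 [-> ->]]].
  + by left; rewrite mulr0.
  + by left; rewrite mul0r.
  + by left; rewrite mulr0.
  + by right; exists (s1 + s2); rewrite -EFinD; split => //; rewrite opprD expRD.
- move=> i _; case: eqP => [->|/eqP h]; first by left.
  right; exists (- ln (c i)); split => //; rewrite opprK lnK //.
  by rewrite posrE lt_neqAle eq_sym h c0.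
Qed.

Lemma bhat_coef_ge0 (X Y : finType) (W : X -> Y -> R) a b : 0 <= bhat_coef W a b.
Proof. by apply: sumr_ge0 => y _; exact: sqrtr_ge0. Qed.

Lemma cyc_expectE (X Y : finType) (P : X -> R) (W : X -> Y -> R) K (pi : {perm 'I_K}) :
  cyc_expect P W pi = (\sum_(x : {ffun 'I_K -> X})
     (\prod_(i < K) P (x i)) * \prod_(j < K) bhat_coef W (x j) (x (pi j)))%:E.
Proof.
rewrite /cyc_expect -sumEFin; apply: eq_bigr => x _.
rewrite /bhat_dist (@expe_cost _ _ (fun j => bhat_coef W (x j) (x (pi j)))) //.
move=> j; exact: bhat_coef_ge0.
Qed.

Lemma psi2_le (X Y : finType) (P : X -> R) (W : X -> Y -> R) (F : R) :
  (forall x, 0 < P x) ->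
  F = \sum_a \sum_b P a * P b * bhat_coef W a b ^+ 2 -> 0 < F ->
  (psi2 P W <= (- (ln F / 2))%:E)%E.
Proof.
move=> Ppos FE Fpos.
set B := bhat_coef W in FE *.
pose Q (p : X * X) := P p.1 * P p.2 * B p.1 p.2 ^+ 2 / F.
have Q0 : forall p, 0 <= Q p.
  move=> p; rewrite /Q; apply: divr_ge0; last exact: ltW.
  by apply: mulr_ge0; [apply: mulr_ge0; exact: ltW|exact: sqr_ge0].
have Q1 : \sum_p Q p = 1.
  have -> : \sum_p Q p = (\sum_(p : X * X) P p.1 * P p.2 * B p.1 p.2 ^+ 2) / F.
    by rewrite /Q mulr_suml.
  by rewrite -(pair_big predT predT (fun a b => P a * P b * B a b ^+ 2)) /= -FE divff // lt0r_neq0.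
apply: ereal_inf_lbound; exists Q; first by split.
have term : forall p, ((Q p)%:E * bhat_dist W p.1 p.2)%E = (Q p * - ln (B p.1 p.2))%:E.
  move=> p; rewrite /bhat_dist -/B; case: eqP => [h|h] //.
  by rewrite /Q h expr0n /= mulr0 mul0r mul0e mul0r.
rewrite /bhat_dist2; under eq_bigr => p _ do rewrite term.
rewrite sumEFin -EFinD; congr (_%:E).
rewrite /KL2 mulr_suml -big_split /=.
have -> : - (ln F / 2) = \sum_p (- (ln F / 2)) * Q p by rewrite -mulr_sumr Q1 mulr1.
apply: eq_bigr => p _.
have [h|h] := eqVneq (B p.1 p.2) 0.
  by rewrite /Q h expr0n /= !(mulr0, mul0r) addr0.
have Bpos : 0 < B p.1 p.2 by rewrite lt_neqAle eq_sym h bhat_coef_ge0.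
have e1 : Q p / (P p.1 * P p.2) = B p.1 p.2 ^+ 2 / F.
  rewrite /Q /= mulrAC [P _ * P _ * _]mulrC mulfK //.
  by rewrite mulf_neq0 // lt0r_neq0.
rewrite e1 ln_div ?posrE ?exprn_gt0 // lnXn //.
rewrite mulr2n; field.
all: try by [].
Qed.

End Main.

Unset Implicit Arguments. Set Strict Implicit.

Theorem lemma2 (R : realType) (X Y : finType) (P : X -> R) (W : X -> Y -> R)
    (K : nat) (pi : {perm 'I_K}) :
  full_pmf P -> trans_kernel W -> (2 <= K)%N -> full_cycle pi ->
  (cyc_expect P W pi <= expeR (- (K%:R)%:E * psi2 P W))%E.
Proof.
move=> [Ppos Psum] HW HK Hcyc.
case: K pi HK Hcyc => [|[|n]] pi // _ Hcyc.
set B := bhat_coef W.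
pose G := fun a b => Num.sqrt (P a) * B a b * Num.sqrt (P b).
have B0 : forall a b, 0 <= B a b by move=> a b; exact: bhat_coef_ge0.
have Bd : forall a, B a a = 1.
  move=> a; rewrite /B /bhat_coef -(HW a).2; apply: eq_bigr => y _.
  by rewrite -expr2 sqrtr_sqr ger0_norm // (HW a).1.
have G2 : forall a b, G a b ^+ 2 = P a * P b * B a b ^+ 2.
  move=> a b; rewrite /G !exprMn !sqr_sqrtr ?ltW //; ring.
pose F := FF G.
have FE : F = \sum_a \sum_b P a * P b * B a b ^+ 2.
  by rewrite /F /FF; apply: eq_bigr => a _; apply: eq_bigr => b _; rewrite G2.
have [a0 _] : exists a : X, true.
  case: (pickP (fun _ : X => true)) => [a _|h]; first by exists a.
  by move: Psum; rewrite big_pred0 // => /eqP; rewrite eq_sym oner_eq0.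
have Fpos : 0 < F.
  rewrite FE (bigD1 a0) //= (bigD1 a0) //= Bd expr1n mulr1.
  have h0 : forall a b, 0 <= P a * P b * B a b ^+ 2.
    by move=> a b; apply: mulr_ge0; [apply: mulr_ge0; exact: ltW|exact: sqr_ge0].
  apply: ltr_wpDr; first by apply: sumr_ge0 => a _; apply: sumr_ge0 => b _.
  apply: ltr_wpDr; first by apply: sumr_ge0 => b _.
  exact: mulr_gt0.
have Hpsi := psi2_le Ppos FE Fpos.
pose T := expR ((n.+2)%:R * (ln F / 2)).
have T2 : T ^+ 2 = F ^+ n.+2.
  rewrite /T -expRM_natl (_ : 2%:R * _ = (n.+2)%:R * ln F); last by field.
  by rewrite expRM_natl lnK // posrE.
have T0 : 0 <= T by exact: expR_ge0.
have HB : forall x : {ffun 'I_n.+2 -> X},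
    (\prod_i P (x i)) * \prod_j B (x j) (x (pi j)) = \prod_j G (x j) (x (pi j)).
  move=> x; rewrite /G big_split big_split /=.
  have -> : \prod_j Num.sqrt (P (x (pi j))) = \prod_j Num.sqrt (P (x j)).
    by rewrite [RHS](reindex_inj (@perm_inj _ pi)).
  rewrite [RHS]mulrAC -[X in _ = X * _]big_split /=; congr (_ * _); apply: eq_bigr => i _.
  by rewrite -expr2 sqr_sqrtr // ltW.
pose i0 := (ord0 : 'I_n.+2).
pose sg := fun k : 'I_n.+2 => iter k pi i0.
have card : #|porbit pi i0| = n.+2 := Hcyc i0.
have sg_inj : injective sg.
  move=> k1 k2; rewrite /sg -(nth_traject pi (ltn_ord k1) i0).
  rewrite -(nth_traject pi (ltn_ord k2) i0) => /eqP.
  have uq := uniq_traject_porbit pi i0; rewrite card in uq.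
  by rewrite nth_uniq ?size_traject // => /eqP /val_inj.
have sgS : forall k, pi (sg k) = sg (ordS k).
  move=> k; rewrite /sg /= -iterS.
  have := ltn_ord k; rewrite leq_eqVlt => /orP [/eqP e|h].
    by rewrite e modnn /=; have := iter_porbit pi i0; rewrite card /= => ->.
  by rewrite modn_small.
have HC : \sum_(x : {ffun 'I_n.+2 -> X}) \prod_j G (x j) (x (pi j))
        = \sum_(y : {ffun 'I_n.+2 -> X}) \prod_k G (y k) (y (ordS k)).
  have [sg' c1 c2] := injF_bij sg_inj.
  pose h := fun x : {ffun 'I_n.+2 -> X} => [ffun k => x (sg k)].
  have hb : bijective h.
    exists (fun y : {ffun 'I_n.+2 -> X} => [ffun j => y (sg' j)]).
      by move=> x; apply/ffunP => j; rewrite !ffunE c2.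
    by move=> y; apply/ffunP => j; rewrite !ffunE c1.
  rewrite [RHS](reindex h) /=; last exact: onW_bij.
  apply: eq_bigr => x _.
  rewrite (reindex_inj sg_inj) /=; apply: eq_bigr => k _.
  by rewrite !ffunE sgS.
have HS : \sum_(x : {ffun 'I_n.+2 -> X})
     (\prod_i P (x i)) * \prod_j B (x j) (x (pi j)) <= T.
  under eq_bigr => x _ do rewrite HB.
  rewrite HC.
  have := cycle_bound G n; rewrite -/F -T2.
  set S := \sum_(y : {ffun 'I_n.+2 -> X}) _ => hS.
  nra.
rewrite cyc_expectE -/B.
apply: le_trans (_ : (_ <= expeR ((n.+2%:R * (ln F / 2))%:E))%E) _.
  by rewrite /= lee_fin.
rewrite lee_expeR mulNe -muleN EFinM.
apply: lee_wpmul2l; first by rewrite lee_fin.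
by rewrite leeNr -EFinN.
Qed.
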